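(* Let $t \in \mathbb{N}_0$ and $b \in \mathbb{N}$ be such that $\Phi_b(x)$ divides the polynomial $T_t(x)$ below. Then $b/\mathrm{rad}(b) < 13$, where \begin{align*} T_t(x) = {}& x^{8t+27} + x^{8t+26} + x^{8t+25} + x^{8t+22} + x^{8t+20} + x^{8t+18} + x^{8t+17} - x^{8t+16} - x^{8t+15} + 2x^{6t+15} \\ & - x^{4t+26} - x^{4t+25} + x^{4t+23} - x^{4t+21} - x^{4t+20} + x^{4t+19} - x^{4t+18} - x^{4t+17} + 3x^{4t+14} - 3x^{4t+13} \\ & + x^{4t+10} + x^{4t+9} - x^{4t+8} + x^{4t+7} + x^{4t+6} - x^{4t+4} + x^{4t+2} + x^{4t+1} - 2x^{2t+12} \\ & + x^{12} + x^{11} - x^{10} - x^9 - x^7 - x^5 - x^2 - x - 1. \end{align*}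
   Context: $\Phi_b(x)$ is the $b$-th cyclotomic polynomial (the monic polynomial whose roots are exactly the primitive $b$-th roots of unity, each simple). $\mathrm{rad}(b)$ denotes the product of the distinct prime divisors of $b$ (the largest square-free divisor of $b$). *)

(* Defs.v *)
From mathcomp Require Import all_boot all_order all_algebra all_field.
Set Implicit Arguments. Unset Strict Implicit. Unset Printing Implicit Defensive.
Import GRing.Theory.
Local Open Scope ring_scope.

Definition nrad (b : nat) : nat := (\prod_(p <- primes b) p)%N.

Definition Tpoly (t : nat) : {poly int} :=
  'X^(8*t+27) + 'X^(8*t+26) + 'X^(8*t+25) + 'X^(8*t+22) + 'X^(8*t+20)
  + 'X^(8*t+18) + 'X^(8*t+17) - 'X^(8*t+16) - 'X^(8*t+15) + 2%:P * 'X^(6*t+15)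
  - 'X^(4*t+26) - 'X^(4*t+25) + 'X^(4*t+23) - 'X^(4*t+21) - 'X^(4*t+20)
  + 'X^(4*t+19) - 'X^(4*t+18) - 'X^(4*t+17) + 3%:P * 'X^(4*t+14) - 3%:P * 'X^(4*t+13)
  + 'X^(4*t+10) + 'X^(4*t+9) - 'X^(4*t+8) + 'X^(4*t+7) + 'X^(4*t+6)
  - 'X^(4*t+4) + 'X^(4*t+2) + 'X^(4*t+1) - 2%:P * 'X^(2*t+12)
  + 'X^12 + 'X^11 - 'X^10 - 'X^9 - 'X^7 - 'X^5 - 'X^2 - 'X - 1.

(* Main.v *)
Require Import Defs.
From mathcomp Require Import all_boot all_order all_algebra all_field.
From mathcomp Require Import ring.
Import Order.TTheory GRing.Theory Num.Theory.
Local Open Scope ring_scope.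

Definition term := (nat * nat * int)%type.
Definition tk (x : term) : nat := x.1.1.
Definition tc (x : term) : nat := x.1.2.
Definition ta (x : term) : int := x.2.
Definition te (x : term) (u : nat) : nat := (tc x + tk x * u)%N.

Definition mkT (k c : nat) (a : int) : term := (k, c, a).
Definition F : seq term :=
 [:: mkT 4 27 (1); mkT 4 26 (1); mkT 4 25 (1); mkT 4 22 (1); mkT 4 20 (1); mkT 4 18 (1); mkT 4 17 (1); mkT 4 16 (-1); mkT 4 15 (-1); mkT 3 15 (2); mkT 2 26 (-1); mkT 2 25 (-1); mkT 2 23 (1); mkT 2 21 (-1); mkT 2 20 (-1); mkT 2 19 (1); mkT 2 18 (-1); mkT 2 17 (-1); mkT 2 14 (3); mkT 2 13 (-3); mkT 2 10 (1); mkT 2 9 (1); mkT 2 8 (-1); mkT 2 7 (1); mkT 2 6 (1); mkT 2 4 (-1); mkT 2 2 (1); mkT 2 1 (1); mkT 1 12 (-2); mkT 0 12 (1); mkT 0 11 (1); mkT 0 10 (-1); mkT 0 9 (-1); mkT 0 7 (-1); mkT 0 5 (-1); mkT 0 2 (-1); mkT 0 1 (-1); mkT 0 0 (-1)].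

Lemma expA (R : comNzRingType) (w : R) n t c : w ^+ (n * t + c) = (w ^+ t) ^+ n * w ^+ c.
Proof. by rewrite exprD mulnC exprM. Qed.
Lemma expB (R : comNzRingType) (w : R) n t c : w ^+ (c + n * (2 * t)) = w ^+ c * (w ^+ t) ^+ (2 * n).
Proof. by rewrite exprD mulnA [(n*2)%N]mulnC [(2*n*t)%N]mulnC exprM. Qed.

Lemma Tlist t :
  Tpoly t = \sum_(x <- F) (ta x)%:P * 'X^(te x (2 * t)).
Proof.
rewrite /Tpoly /F !big_cons big_nil /te /tk /tc /ta /=.
rewrite !expA !expB.
rewrite -['X^1]/('X : {poly int}).
ring.
Qed.

Lemma Teval t (w : algC) :
  (map_poly intr (Tpoly t)).[w] = \sum_(x <- F) (ta x)%:~R * w ^+ te x (2 * t).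
Proof.
rewrite Tlist rmorph_sum horner_sum; apply: eq_bigr => x _.
by rewrite rmorphM /= map_polyC map_polyXn hornerE hornerXn /=.
Qed.

Lemma geom (w : algC) d n : d.-primitive_root w ->
  \sum_(j < d) w ^+ (j * n) = if (d %| n)%N then d%:R else 0.
Proof.
move=> pw; case: ifP => dn.
  have wn : w ^+ n = 1 by apply/eqP; rewrite -(prim_order_dvd pw).
  under eq_bigr => j _ do rewrite mulnC exprM wn expr1n.
  by rewrite sumr_const card_ord.
have v1 : w ^+ n != 1 by rewrite -(prim_order_dvd pw) dn.
have vd : (w ^+ n) ^+ d = 1 by rewrite -exprM mulnC exprM (prim_expr_order pw) expr1n.
have := subrX1 (w ^+ n) d; rewrite vd subrr => /esym/eqP.
rewrite mulf_eq0 subr_eq0 (negbTE v1) /= => /eqP S.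
by rewrite -[RHS]S; apply: eq_bigr => j _; rewrite mulnC exprM.
Qed.

Lemma dvd_cls d e r : (0 < d)%N -> (d %| e + (d-1)*r)%N = (e %% d == r %% d)%N.
Proof.
move=> d0; rewrite /dvdn.
have -> : forall x, (x %% d == 0)%N = (x == 0 %[mod d])%N by move=> x; rewrite mod0n.
rewrite -(eqn_modDr r) add0n -addnA.
rewrite -{2}(mul1n r) -mulnDl subnK // addnC mulnC modnMDl //.
Qed.

Lemma coprime_step (b m j : nat) : (0 < b)%N ->
  (forall p, prime p -> (p %| b)%N -> (p %| m)%N) -> coprime (1 + m * j) b.
Proof.
move=> b0 hp; rewrite /coprime.
have g0 : (0 < gcdn (1 + m * j) b)%N by rewrite gcdn_gt0 b0 orbT.
rewrite eqn_leq g0 andbT leqNgt; apply/negP => g1.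
have pp := pdiv_prime g1; have pg := pdiv_dvd (gcdn (1 + m * j) b).
have pb : (pdiv (gcdn (1 + m * j) b) %| b)%N := dvdn_trans pg (dvdn_gcdr _ _).
have p1 : (pdiv (gcdn (1 + m * j) b) %| 1 + m * j)%N := dvdn_trans pg (dvdn_gcdl _ _).
have pm := hp _ pp pb.
rewrite dvdn_addl ?dvdn_mulr // in p1.
by rewrite dvdn1 in p1; move: pp; rewrite (eqP p1).
Qed.

Lemma filt (b m d : nat) (z : algC) (G : seq term) u :
  (0 < d)%N -> b = (d * m)%N -> (forall p, prime p -> (p %| b)%N -> (p %| m)%N) ->
  b.-primitive_root z ->
  (forall w : algC, b.-primitive_root w -> \sum_(x <- G) (ta x)%:~R * w ^+ te x u = 0) ->
  forall r, \sum_(x <- G | (te x u %% d == r %% d)%N) (ta x)%:~R * z ^+ te x u = 0.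
Proof.
move=> d0 bE hp pz hw r.
have b0 := prim_order_gt0 pz.
have m0 : (0 < m)%N by move: b0; rewrite bE muln_gt0 => /andP[].
have om : d.-primitive_root (z ^+ m).
  have := exp_prim_root pz m.
  have -> : gcdn m b = m by apply/gcdn_idPl; rewrite bE dvdn_mull.
  by rewrite bE mulnK.
set o := z ^+ m in om.
set R := ((d - 1) * r)%N.
have key : \sum_(j < d) o ^+ (j * R) *
    (\sum_(x <- G) (ta x)%:~R * (z ^+ (1 + m * j)) ^+ te x u) = 0.
  apply: big1 => j _; rewrite hw ?mulr0 //.
  by rewrite prim_root_exp_coprime // coprime_step.
have E : forall x (j : 'I_d), o ^+ (j * R) * ((ta x)%:~R * (z ^+ (1 + m * j)) ^+ te x u)
   = (ta x)%:~R * z ^+ te x u * o ^+ (j * (te x u + R)).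
  move=> x j; rewrite (mulnDr j) (exprD o).
  have -> : (z ^+ (1 + m * j)) ^+ te x u = z ^+ te x u * o ^+ (j * te x u).
    by rewrite -exprM mulnDl mul1n exprD /o -exprM mulnA.
  ring.
move: key.
under eq_bigr => j _ do rewrite mulr_sumr.
rewrite exchange_big /=.
under eq_bigr => x _ do (under eq_bigr => j _ do rewrite E; rewrite -mulr_sumr geom // dvd_cls //).
move=> key; rewrite big_mkcond /=.
have dn : (d%:R : algC) != 0 by rewrite pnatr_eq0 -lt0n.
apply/eqP; rewrite -(mulIr_eq0 _ (mulIf dn)) ; apply/eqP.
rewrite -[RHS]key mulr_suml; apply: eq_bigr => x _.
by case: ifP => _; rewrite ?mul0r ?mulr0.
Qed.

Definition csum (d s : nat) (J : term) : nat :=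
  foldr (fun x acc => if (te x s %% d == te J s %% d)%N then (absz (ta x) + acc)%N else acc) 0%N F.
Definition chk (d s : nat) (J : term) : bool := (csum d s J < 2 * absz (ta J))%N.

Definition fincheck : bool :=
  all (fun d => all (fun s => ((d == 13) && ((s == 11) || (s == 12)))%N || has (chk d s) F) (iota 0 d)) (iota 13 36).

Lemma fincheckT : fincheck = true.
Proof. vm_compute. reflexivity. Qed.

Definition dlt (J x : term) : int * int :=
  ((tk J)%:Z - (tk x)%:Z, (tc J)%:Z - (tc x)%:Z).
Definition pb (p q : int * int) : int :=
  if p.1 == 0 then p.2 else if q.1 == 0 then q.2 else q.1 * p.2 - p.1 * q.2.
Definition okp p q := (pb p q != 0) && (absz (pb p q) <= 48)%N.
Definition J1 := mkT 4 25 1.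
Definition J2 := mkT 2 26 (-1).
Definition J3 := mkT 2 14 3.
Definition trip : bool :=
  all (fun x1 => (x1 == J1) || all (fun x2 => (x2 == J2) || all (fun x3 => (x3 == J3) ||
     [|| okp (dlt J1 x1) (dlt J2 x2), okp (dlt J1 x1) (dlt J3 x3) | okp (dlt J2 x2) (dlt J3 x3)]) F) F) F.
Lemma tripT : trip = true.
Proof. vm_compute. reflexivity. Qed.

Lemma csum_big d s J :
  csum d s J = (\sum_(x <- F | (te x s %% d == te J s %% d)%N) absz (ta x))%N.
Proof.
rewrite /csum; elim: F => [|x G IH]; first by rewrite big_nil.
by rewrite big_cons /= IH.
Qed.

Lemma cls_mod d u x : (te x u %% d = te x (u %% d) %% d)%N.
Proof. by rewrite /te -modnDmr -modnMmr modnDmr. Qed.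

Lemma chk_mod d u J : chk d u J = chk d (u %% d) J.
Proof.
rewrite /chk !csum_big; congr (_ < _)%N.
by apply: eq_bigl => x; rewrite !(cls_mod d u).
Qed.

Lemma uniqF : uniq F. Proof. by vm_compute. Qed.

Lemma sing_chk d u J : J \in F -> ta J != 0 ->
  ~~ has (fun x => (x != J) && (te x u %% d == te J u %% d)%N) F -> chk d u J.
Proof.
move=> JF a0 /hasPn H.
rewrite /chk csum_big.
rewrite -big_filter.
have -> : [seq i <- F | (te i u %% d == te J u %% d)%N] = [:: J].
  rewrite -[RHS](filter_pred1_uniq uniqF JF); apply: eq_in_filter => x xF.
  have := H x xF; case: (x =P J) => [->|/eqP nxJ] /=; first by rewrite !eqxx.
  by move/negbTE ->; rewrite (negbTE nxJ).
rewrite big_seq1 mul2n -addnn -{1}(addn0 (absz _)) ltn_add2l absz_gt0 //.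
Qed.

Lemma cls_dvd {d u : nat} {J x : term} : (te x u %% d == te J u %% d)%N ->
  (d%:Z %| (dlt J x).1 * u%:Z + (dlt J x).2)%Z.
Proof.
move=> h.
have -> : (dlt J x).1 * u%:Z + (dlt J x).2 = (te J u)%:Z - (te x u)%:Z.
  by rewrite /dlt /te /= !PoszD !PoszM; ring.
by rewrite -eqz_mod_dvd /= !modz_nat eqz_nat eq_sym.
Qed.

Lemma pb_dvd {d u : int} {p q : int * int} :
  (d %| p.1 * u + p.2)%Z -> (d %| q.1 * u + q.2)%Z -> (d %| pb p q)%Z.
Proof.
case: p q => a1 b1 [a2 b2] /= h1 h2; rewrite /pb /=.
case: (a1 =P 0) => [e1|n1]; first by move: h1; rewrite e1 mul0r add0r.
case: (a2 =P 0) => [e2|n2]; first by move: h2; rewrite e2 mul0r add0r.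
have -> : a2 * b1 - a1 * b2 = a2 * (a1 * u + b1) - a1 * (a2 * u + b2) by ring.
by rewrite rpredB // dvdz_mull.
Qed.

Lemma okp_le {d : nat} {u : int} {p q : int * int} : (d%:Z %| p.1 * u + p.2)%Z -> (d%:Z %| q.1 * u + q.2)%Z ->
  okp p q -> (d <= 48)%N.
Proof.
move=> h1 h2 /andP[nz le]; have := pb_dvd h1 h2.
rewrite /dvdz /= => /dvdn_leq; rewrite absz_gt0 nz => /(_ isT) h.
exact: leq_trans h le.
Qed.

Lemma bigcase d u : (49 <= d)%N -> has (chk d u) F.
Proof.
move=> d49.
have key : forall J, J \in F -> ta J != 0 -> chk d u J \/
   exists2 x, x \in F & (x != J) && (te x u %% d == te J u %% d)%N.
  move=> J JF a0; case: (boolP (has (fun x => (x != J) && (te x u %% d == te J u %% d)%N) F)).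
    by move/hasP => [x xF hx]; right; exists x.
  by move=> h; left; apply: sing_chk.
have [c1|[x1 x1F /andP[n1 e1]]] := key J1 isT isT; first by apply/hasP; exists J1.
have [c2|[x2 x2F /andP[n2 e2]]] := key J2 isT isT; first by apply/hasP; exists J2.
have [c3|[x3 x3F /andP[n3 e3]]] := key J3 isT isT; first by apply/hasP; exists J3.
have T := tripT; rewrite /trip in T.
move/allP: T => T; have := T x1 x1F; rewrite (negbTE n1) orFb => /allP T2.
have := T2 x2 x2F; rewrite (negbTE n2) orFb => /allP T3.
have := T3 x3 x3F; rewrite (negbTE n3) orFb.
have d1 := cls_dvd e1; have d2 := cls_dvd e2; have d3 := cls_dvd e3.
case/or3P => h.
- by have := okp_le d1 d2 h; rewrite leqNgt (leq_trans _ d49).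
- by have := okp_le d1 d3 h; rewrite leqNgt (leq_trans _ d49).
- by have := okp_le d2 d3 h; rewrite leqNgt (leq_trans _ d49).
Qed.

Lemma absC (a : int) : ((absz a)%:R : algC) = `|a%:~R|.
Proof. by rewrite natr_absz intr_norm. Qed.

Lemma dom (z : algC) (P : pred term) u J : J \in F -> `|z| = 1 -> P J ->
  \sum_(x <- F | P x) (ta x)%:~R * z ^+ te x u = 0 ->
  (2 * absz (ta J) <= \sum_(x <- F | P x) absz (ta x))%N.
Proof.
move=> JF z1 PJ S.
rewrite (big_rem J) //= PJ in S *.
set S' := \sum_(y <- rem J F | P y) _ in S.
have h : `|(ta J)%:~R : algC| <= \sum_(y <- rem J F | P y) `|(ta y)%:~R : algC|.
  have -> : `|(ta J)%:~R : algC| = `|S'|.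
    move/eqP: S; rewrite addr_eq0 => /eqP E.
    by rewrite -[`|S'|]normrN -E normrM normrX z1 expr1n mulr1.
  apply: le_trans (ler_norm_sum _ _ _) _; apply: ler_sum => x _.
  by rewrite normrM normrX z1 expr1n mulr1.
have h' : (absz (ta J) <= \sum_(y <- rem J F | P y) absz (ta y))%N.
  by rewrite -(ler_nat algC) natr_sum absC; apply: le_trans h _; apply: ler_sum => x _; rewrite absC.
by rewrite (big_rem J) //= PJ mul2n -addnn leq_add2l.
Qed.

Lemma nrad_gt0 b : (0 < nrad b)%N.
Proof.
rewrite /nrad big_seq; apply: prodn_cond_gt0 => p.
by rewrite mem_primes => /andP[pp _]; exact: prime_gt0.
Qed.

Lemma nrad_dvd b : (0 < b)%N -> (nrad b %| b)%N.
Proof.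
move=> b0; rewrite /nrad {2}(prod_prime_decomp b0) prime_decompE big_map /=.
rewrite big_seq [X in (_ %| X)%N]big_seq.
apply: (big_ind2 (fun x y => x %| y)%N) => //.
  by move=> ? ? ? ? ; apply: dvdn_mul.
by move=> p pb; apply: dvdn_exp; rewrite ?logn_gt0.
Qed.

Lemma nrad_hp b : (0 < b)%N -> forall p, prime p -> (p %| b)%N -> (p %| nrad b)%N.
Proof.
move=> b0 p pp pb; have pin : p \in primes b by rewrite mem_primes pp b0.
by rewrite /nrad (big_rem p) //= dvdn_mulr.
Qed.

Lemma zneq0 {z : algC} : `|z| = 1 -> z != 0.
Proof. by move=> h; apply/eqP => z0; move: h; rewrite z0 normr0 => /eqP; rewrite eq_sym oner_eq0. Qed.

Lemma special (z : algC) (b m u : nat) : b.-primitive_root z -> `|z| = 1 ->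
  b = (13 * m)%N -> (13 %| m)%N -> ((u %% 13 == 11) || (u %% 13 == 12))%N ->
  (forall r, \sum_(x <- F | (te x u %% 13 == r %% 13)%N) (ta x)%:~R * z ^+ te x u = 0) -> False.
Proof.
move=> pz z1 bE m13 hs H.
have b0 := prim_order_gt0 pz.
have m0 : (0 < m)%N by move: b0; rewrite bE muln_gt0 => /andP[].
have bge : (169 <= b)%N by rewrite bE (leq_mul2l 13 13 m) /=; apply: dvdn_leq.
have zn := zneq0 z1.
case/orP: hs => /eqP hs.
- have := H (te (mkT 2 7 1) u).
  rewrite (eq_bigl (fun x => te x 11 %% 13 == te (mkT 2 7 1) 11 %% 13)%N); last first.
    by move=> x; rewrite /= !(cls_mod 13 u) hs.
  rewrite -big_filter.
  have -> : [seq i <- F | (te i 11 %% 13 == te (mkT 2 7 1) 11 %% 13)%N] = [:: mkT 2 20 (-1); mkT 2 7 1].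
    by vm_compute.
  rewrite !big_cons big_nil /te /tc /tk /ta /= => E.
  have e : z ^+ (20 + 2 * u) = z ^+ 13 * z ^+ (7 + 2 * u) by rewrite -exprD addnA.
  rewrite e in E.
  have : (1 - z ^+ 13) * z ^+ (7 + 2 * u) = 0 by rewrite -[RHS]E; ring.
  move/eqP; rewrite mulf_eq0 expf_eq0 (negbTE zn) andbF orbF subr_eq0 eq_sym.
  rewrite -(prim_order_dvd pz) => bd.
  have h := dvdn_leq _ bd; by have := leq_trans bge (h isT).
- have := H (te (mkT 2 6 1) u).
  rewrite (eq_bigl (fun x => te x 12 %% 13 == te (mkT 2 6 1) 12 %% 13)%N); last first.
    by move=> x; rewrite /= !(cls_mod 13 u) hs.
  rewrite -big_filter.
  have -> : [seq i <- F | (te i 12 %% 13 == te (mkT 2 6 1) 12 %% 13)%N] = [:: mkT 2 19 1; mkT 2 6 1].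
    by vm_compute.
  rewrite !big_cons big_nil /te /tc /tk /ta /= => E.
  have e : z ^+ (19 + 2 * u) = z ^+ 13 * z ^+ (6 + 2 * u) by rewrite -exprD addnA.
  rewrite e in E.
  have : (1 + z ^+ 13) * z ^+ (6 + 2 * u) = 0 by rewrite -[RHS]E; ring.
  move/eqP; rewrite mulf_eq0 expf_eq0 (negbTE zn) andbF orbF addr_eq0 => /eqP e13'.
  have e13 : z ^+ 13 = -1 by rewrite e13' opprK.
  have : z ^+ 26 == 1 by rewrite (exprM z 13 2) e13 sqrrN expr1n.
  rewrite -(prim_order_dvd pz) => bd.
  have h := dvdn_leq _ bd; by have := leq_trans bge (h isT).
Qed.

Theorem mainTheorem9 (t b : nat) (hb : (0 < b)%N)
  (hdiv : exists q : {poly int}, Tpoly t = q * 'Phi_b) :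
  (divn b (nrad b) < 13)%N.
Proof.
rewrite ltnNge; apply/negP => d13.
have m0 := nrad_gt0 b.
have bE : b = (b %/ nrad b * nrad b)%N by rewrite divnK // nrad_dvd.
have hp := @nrad_hp b hb.
set m := nrad b in m0 bE hp d13; set d := (b %/ m)%N in bE d13.
have d0 : (0 < d)%N by apply: leq_trans d13.
have [z pz] := C_prim_root_exists hb.
have hw : forall w : algC, b.-primitive_root w ->
    \sum_(x <- F) (ta x)%:~R * w ^+ te x (2 * t) = 0.
  move=> w pw; rewrite -Teval; case: hdiv => q ->.
  rewrite rmorphM /= hornerM (Cintr_Cyclotomic pw).
  have := root_cyclotomic pw w; rewrite pw => /rootP ->; by rewrite mulr0.
have z1 : `|z| = 1.
  have := prim_expr_order pz; move/(congr1 Num.norm); rewrite normrX normr1 => /eqP.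
  by rewrite pexpr_eq1 // => /eqP.
set u := (2 * t)%N in hw.
have clsum := @filt b m d z F u d0 bE hp pz hw.
have notchk : forall J, J \in F -> ~~ chk d u J.
  move=> J JF; rewrite /chk csum_big -leqNgt.
  by apply: (@dom z _ u J JF z1) => //; apply: clsum.
case: (leqP d 48) => dl.
  have := fincheckT; rewrite /fincheck => /allP H1.
  have dI : d \in iota 13 36 by rewrite mem_iota d13 /=; apply: leq_trans dl _.
  have /allP H2 := H1 d dI.
  have sI : (u %% d)%N \in iota 0 d by rewrite mem_iota /= ltn_pmod.
  case/orP: (H2 _ sI) => [/andP [/eqP dE hs]|/hasP [J JF c]].
    rewrite dE in hs; apply: (@special z b m u pz z1 _ _ hs).
    - by rewrite bE dE mulnC.
    - by apply: hp => //; rewrite bE dE dvdn_mulr.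
    - by rewrite -dE; apply: clsum.
  by move: (notchk J JF); rewrite chk_mod c.
by have /hasP [J JF c] := @bigcase d u dl; move: (notchk J JF); rewrite c.
Qed.
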